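(* Let $(P,\leqslant)$ be a conditionally-complete interpolating poset, let $P^* := \{x \in P : \exists\, y \in P,\ y \ll x\}$, and let $k: P^* \to P^*$ be given by $k(x) = \bigvee \{y \in P : y \ll x\}$ (supremum in $P$). Let $Q = k(P^* )$, let $\sim$ be the equivalence relation on $P^*$ defined by $x \sim y \iff k(x) = k(y)$, let $\Pi = P^*/\!\sim$ and $\pi: P^* \to \Pi$ the quotient map. Then $\pi(x) \mapsto k(x)$ is a well-defined bijection $f:\Pi \to Q$, so $Q$ is isomorphic to $\Pi$ when $\Pi$ is given the order transported from $Q$ via $f$; and with this order on $\Pi$, the quotient map $\pi: P^* \to \Pi$ is continuous for the Lawson topologies on $P^*$ and $\Pi$.
   Context: A poset is conditionally-complete if every nonempty subset bounded above has a supremum. A nonempty subset $D$ is directed if any two elements of $D$ have an upper bound in $D$. For $x,y \in P$, $x \ll y$ means: for every directed subset $D$ of $P$ bounded above with supremum $d_0$, $y \leqslant d_0$ implies $x \leqslant d$ for some $d \in D$. $P$ is interpolating if whenever $x \ll y$ there is $z \in P$ with $x \ll z \ll y$. The Lawson topology on a poset is the topology generated by the Scott-open sets (upper sets $U$ such that any directed set with supremum in $U$ meets $U$) together with the complements of principal upper sets $\uparrow x$. *)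

(* Defs.v *)
From Stdlib Require Import List.
Set Implicit Arguments.

Section Order.
Variables (T : Type) (le : T -> T -> Prop).

Definition partial_order : Prop :=
  (forall x, le x x) /\
  (forall x y, le x y -> le y x -> x = y) /\
  (forall x y z, le x y -> le y z -> le x z).

Definition upper_bound (A : T -> Prop) (u : T) : Prop := forall a, A a -> le a u.
Definition bounded_above (A : T -> Prop) : Prop := exists u, upper_bound A u.
Definition is_sup (A : T -> Prop) (s : T) : Prop :=
  upper_bound A s /\ forall u, upper_bound A u -> le s u.

Definition cond_complete : Prop :=
  forall A : T -> Prop, (exists a, A a) -> bounded_above A -> exists s, is_sup A s.

Definition directed (D : T -> Prop) : Prop :=
  (exists d, D d) /\
  forall a b, D a -> D b -> exists c, D c /\ le a c /\ le b c.

Definition way_below (x y : T) : Prop :=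
  forall (D : T -> Prop) (d0 : T), directed D -> bounded_above D -> is_sup D d0 ->
    le y d0 -> exists d, D d /\ le x d.

Definition interpolating : Prop :=
  forall x y, way_below x y -> exists z, way_below x z /\ way_below z y.

Definition scott_open (U : T -> Prop) : Prop :=
  (forall x y, U x -> le x y -> U y) /\
  (forall (D : T -> Prop) (d0 : T), directed D -> is_sup D d0 -> U d0 ->
     exists d, D d /\ U d).

Definition lawson_subbasic (S : T -> Prop) : Prop :=
  scott_open S \/ exists x, forall y, S y <-> ~ le x y.

Definition lawson_open (U : T -> Prop) : Prop :=
  forall x, U x -> exists l : list (T -> Prop),
    Forall lawson_subbasic l /\ (forall S, In S l -> S x) /\
    (forall y, (forall S, In S l -> S y) -> U y).

End Order.

Definition lawson_continuous {A B : Type} (leA : A -> A -> Prop) (leB : B -> B -> Prop)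
  (g : A -> B) : Prop :=
  forall V : B -> Prop, lawson_open leB V -> lawson_open leA (fun a => V (g a)).

Definition sub_le {T : Type} (le : T -> T -> Prop) (P : T -> Prop) (a b : {x : T | P x}) : Prop :=
  le (proj1_sig a) (proj1_sig b).

Definition in_Pstar {T : Type} (le : T -> T -> Prop) (x : T) : Prop :=
  exists y, way_below le y x.
Definition Pstar {T : Type} (le : T -> T -> Prop) := {x : T | in_Pstar le x}.

Definition Img {A B : Type} (k : A -> B) := {q : B | exists x, k x = q}.

(* quotient of A by x ~ y <-> k x = k y: the set of equivalence classes *)
Definition kclass {A B : Type} (k : A -> B) :=
  {S : A -> Prop | exists x, S = fun y => k y = k x}.
Definition kproj {A B : Type} (k : A -> B) (x : A) : kclass k :=
  exist _ (fun y => k y = k x) (ex_intro _ x eq_refl).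

Definition bijective_map {A B : Type} (f : A -> B) : Prop :=
  (forall a b, f a = f b -> a = b) /\ (forall q, exists a, f a = q).

(* Main.v *)
Require Import Defs.
From Stdlib Require Import List Classical ClassicalEpsilon ProofIrrelevance.

Section Aux.
Variables (T : Type) (le : T -> T -> Prop).
Hypothesis Hpo : partial_order le.

Lemma wb_le_trans x y z : way_below le x y -> le y z -> way_below le x z.
Proof.
  destruct Hpo as [Hr [Ha Ht]].
  intros H Hyz D d0 HD Hb Hs Hz. apply (H D d0 HD Hb Hs). eauto.
Qed.

Lemma le_wb_trans x y z : le x y -> way_below le y z -> way_below le x z.
Proof.
  destruct Hpo as [Hr [Ha Ht]].
  intros Hxy H D d0 HD Hb Hs Hz. destruct (H D d0 HD Hb Hs Hz) as [d [Hd Hyd]].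
  exists d; split; eauto.
Qed.

Lemma wb_le x y : way_below le x y -> le x y.
Proof.
  destruct Hpo as [Hr [Ha Ht]].
  intros H. destruct (H (fun d => d = y) y) as [d [Hd Hxd]].
  - split; [exists y; reflexivity|]. intros a b -> ->. exists y; auto.
  - exists y; intros a ->; auto.
  - split; [intros a ->; auto | intros u Hu; apply Hu; reflexivity].
  - apply Hr.
  - subst; auto.
Qed.

Lemma scott_lawson (U : T -> Prop) : scott_open le U -> lawson_open le U.
Proof.
  intros Hs x Hx. exists (U :: nil). split; [|split].
  - constructor; [left; exact Hs | constructor].
  - intros S [<-|[]]; exact Hx.
  - intros y Hy. apply (Hy U); left; reflexivity.
Qed.
End Aux.

Lemma cont_subbasic {A B : Type} (leA : A -> A -> Prop) (leB : B -> B -> Prop) (g : A -> B) :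
  (forall S, lawson_subbasic leB S -> lawson_open leA (fun a => S (g a))) ->
  lawson_continuous leA leB g.
Proof.
  intros H V HV x Hx.
  destruct (HV (g x) Hx) as [l [Hl [Hin Hsub]]].
  assert (Hm : forall l0, Forall (lawson_subbasic leB) l0 -> (forall S, In S l0 -> S (g x)) ->
    exists l', Forall (lawson_subbasic leA) l' /\ (forall S, In S l' -> S x) /\
      (forall y, (forall S, In S l' -> S y) -> forall S, In S l0 -> S (g y))).
  { clear Hl Hin Hsub l. intro l0. induction l0 as [|S l IH]; intros Hl Hin.
    - exists nil; split; [constructor|split]; [intros S []| intros y _ S []].
    - inversion Hl; subst.
      destruct (H S H2 x (Hin S (or_introl eq_refl))) as [l1 [Hl1 [Hi1 Hs1]]].
      destruct (IH H3 (fun S' h => Hin S' (or_intror h))) as [l2 [Hl2 [Hi2 Hs2]]].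
      exists (l1 ++ l2). split; [apply Forall_app; split; auto|split].
      + intros S' h. apply in_app_iff in h as [h|h]; [apply Hi1|apply Hi2]; exact h.
      + intros y Hy S' [<-|h].
        * apply Hs1. intros S'' h'. apply Hy. apply in_app_iff; auto.
        * apply (Hs2 y); auto. intros S'' h'. apply Hy. apply in_app_iff; auto. }
  destruct (Hm l Hl Hin) as [l' [H1 [H2 H3]]].
  exists l'. split; [auto|split; [auto|]].
  intros y Hy. apply Hsub. apply H3; auto.
Qed.

Lemma kclass_eq {A B : Type} (k : A -> B) (a b : kclass k) : proj1_sig a = proj1_sig b -> a = b.
Proof.
  destruct a as [a pa], b as [b pb]; simpl; intros ->. f_equal. apply proof_irrelevance.
Qed.

Lemma img_eq {A B : Type} (k : A -> B) (a b : Img k) : proj1_sig a = proj1_sig b -> a = b.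
Proof.
  destruct a as [a pa], b as [b pb]; simpl; intros ->. f_equal. apply proof_irrelevance.
Qed.

Theorem proposition2p10 (T : Type) (le : T -> T -> Prop)
  (Hpo : partial_order le) (Hcc : cond_complete le) (Hint : interpolating le)
  (k : Pstar le -> T)
  (Hk : forall x : Pstar le, is_sup le (fun y => way_below le y (proj1_sig x)) (k x)) :
  (forall x : Pstar le, in_Pstar le (k x)) /\
  exists f : kclass k -> Img k,
    (forall x : Pstar le, proj1_sig (f (kproj k x)) = k x) /\
    bijective_map f /\
    lawson_continuous (sub_le le (in_Pstar le))
      (fun a b : kclass k => le (proj1_sig (f a)) (proj1_sig (f b)))
      (kproj k).
Proof.
  pose proof Hpo as [Hr [Ha Ht]].
  assert (Hyk : forall x y, way_below le y (proj1_sig x) -> le y (k x)).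
  { intros x y H. apply (proj1 (Hk x)). exact H. }
  assert (Hwbk : forall x y, way_below le y (proj1_sig x) -> way_below le y (k x)).
  { intros x y H. destruct (Hint _ _ H) as [z [H1 H2]].
    apply (@wb_le_trans _ _ Hpo _ _ _ H1). apply Hyk; auto. }
  assert (Hkmono : forall x y : Pstar le, le (proj1_sig x) (proj1_sig y) -> le (k x) (k y)).
  { intros x y H. apply (proj2 (Hk x)). intros w Hw. apply Hyk.
    apply (@wb_le_trans _ _ Hpo _ _ _ Hw H). }
  assert (Hpart1 : forall x : Pstar le, in_Pstar le (k x)).
  { intros [x [y Hy]]. exists y. apply (Hwbk (exist _ x (ex_intro _ y Hy))). exact Hy. }
  split; [exact Hpart1|].
  pose (rep := fun S : kclass k => proj1_sig (constructive_indefinite_description _ (proj2_sig S))).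
  assert (Hrep : forall S, proj1_sig S = fun y => k y = k (rep S)).
  { intro S. unfold rep. destruct (constructive_indefinite_description _ _) as [r Hr']. exact Hr'. }
  pose (f := fun S : kclass k => exist (fun q => exists x, k x = q) (k (rep S)) (ex_intro _ (rep S) eq_refl)).
  assert (Hf : forall x, proj1_sig (f (kproj k x)) = k x).
  { intro x. simpl. pose proof (Hrep (kproj k x)) as E. simpl in E.
    assert (E2 : k x = k (rep (kproj k x))) by (rewrite <- (f_equal (fun g => g x) E); reflexivity).
    symmetry; exact E2. }
  exists f. split; [exact Hf|split].
  - split.
    + intros a b E. apply kclass_eq. rewrite (Hrep a), (Hrep b).
      apply (f_equal (@proj1_sig _ _)) in E. simpl in E. rewrite E. reflexivity.
    + intros [q [x Hx]]. exists (kproj k x). apply img_eq. rewrite Hf. exact Hx.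
  - apply cont_subbasic. intros S [HS | [q HS]].
    +
      apply scott_lawson. destruct HS as [Hup Hdir]. split.
      * intros x y Hx Hxy. apply (Hup _ _ Hx). rewrite !Hf. apply Hkmono. exact Hxy.
      * intros D d0 HD Hsup Hd0.
        pose (D' := fun e : kclass k => exists d, D d /\ e = kproj k d).
        destruct (Hdir D' (kproj k d0)) as [e [[d [Hd ->]] He]].
        -- destruct HD as [[d Hd] HD2]. split; [exists (kproj k d); exists d; auto|].
           intros a b [da [Hda ->]] [db [Hdb ->]].
           destruct (HD2 da db Hda Hdb) as [c [Hc [H1 H2]]].
           exists (kproj k c). split; [exists c; auto|]. rewrite !Hf. split; apply Hkmono; auto.
        -- split.
           ++ intros e [d [Hd ->]]. rewrite !Hf. apply Hkmono. apply (proj1 Hsup). exact Hd.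
           ++ intros u Hu. rewrite Hf. change (le (k d0) (k (rep u))).
              assert (Hub : forall d, D d -> le (k d) (k (rep u))).
              { intros d Hd. pose proof (Hu (kproj k d) (ex_intro _ d (conj Hd eq_refl))) as H.
                cbv beta in H; rewrite Hf in H. exact H. }
              pose (D'' := fun t => exists d, D d /\ t = proj1_sig d).
              assert (HsupT : is_sup le D'' (proj1_sig d0)).
              { split.
                - intros t [d [Hd ->]]. apply (proj1 Hsup). exact Hd.
                - intros v Hv. destruct HD as [[d1 Hd1] _].
                  destruct (Hcc D'' (ex_intro _ _ (ex_intro _ d1 (conj Hd1 eq_refl))) (ex_intro _ v Hv))
                    as [s [Hs1 Hs2]].
                  assert (Hsin : in_Pstar le s).
                  { destruct d1 as [d1v [y1 Hy1]]. exists y1.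
                    apply (@wb_le_trans _ _ Hpo _ _ _ Hy1). apply Hs1. exists (exist _ d1v (ex_intro _ y1 Hy1)); auto. }
                  apply Ht with s; auto.
                  apply (proj2 Hsup (exist _ s Hsin)). intros d Hd. apply Hs1. exists d; auto. }
              apply (proj2 (Hk d0)). intros y Hy.
              destruct (Hint _ _ Hy) as [y' [Hyy' Hy'd0]].
              destruct (Hy'd0 D'' (proj1_sig d0)) as [t [[d1 [Hd1 ->]] Hle]].
              ** destruct HD as [[d Hd] HD2]. split; [exists (proj1_sig d); exists d; auto|].
                 intros a b [da [Hda ->]] [db [Hdb ->]].
                 destruct (HD2 da db Hda Hdb) as [c [Hc [H1 H2]]].
                 exists (proj1_sig c). split; [exists c; auto|auto].
              ** exists (proj1_sig d0). apply (proj1 HsupT).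
              ** exact HsupT.
              ** apply Hr.
              ** apply Ht with (k d1); [|apply Hub; auto].
                 apply Hyk. apply (@wb_le_trans _ _ Hpo _ _ _ Hyy' Hle).
        -- exact Hd0.
        -- exists d; auto.
    +
      intros x Hx. pose (z := rep q).
      assert (Hnz : ~ le (k z) (k x)).
      { intro H. apply (proj1 (HS (kproj k x)) Hx). rewrite Hf. exact H. }
      assert (Hw : exists w, way_below le w (proj1_sig z) /\ ~ le w (proj1_sig x)).
      { apply NNPP. intro Hn. apply Hnz. apply (proj2 (Hk z)). intros w Hw.
        destruct (Hint _ _ Hw) as [w' [H1 H2]]. apply Hyk.
        apply (@wb_le_trans _ _ Hpo _ _ _ H1). apply NNPP. intro Hc. apply Hn. exists w'; auto. }
      destruct Hw as [w [Hw Hnw]].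
      destruct (Hint _ _ Hw) as [w' [H1 H2]].
      pose (w'' := exist (in_Pstar le) w' (ex_intro _ w H1) : Pstar le).
      exists ((fun y : Pstar le => ~ sub_le le (in_Pstar le) w'' y) :: nil).
      split; [|split].
      * constructor; [|constructor]. right. exists w''. intro y; tauto.
      * intros U [<-|[]]. unfold sub_le; simpl. intro Hc. apply Hnw.
        apply Ht with w'; auto. apply (@wb_le _ _ Hpo _ _ H1).
      * intros y Hy. apply (proj2 (HS (kproj k y))). rewrite Hf. intro Hc.
        apply (Hy _ (or_introl eq_refl)). unfold sub_le; simpl.
        apply Ht with (k z); [apply Hyk; exact H2|].
        apply Ht with (k y); auto. apply (proj2 (Hk y)). intros t Ht'. apply (@wb_le _ _ Hpo _ _ Ht').
Qed.
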